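(* Let $N\ge 1$ and $\alpha\in\mathbb{C}$ with $|\alpha|=1$. The augmented Laplacian $L_\alpha(\mathcal{B}_N)=L(\mathcal{B}_N)+C_\alpha$ has a complete set of eigenvectors each of which is of one of the following forms: (i) $h$ is a Dirichlet eigenvector of $L(\mathcal{B}_N)$ (and its $L_\alpha(\mathcal{B}_N)$-eigenvalue equals its $L(\mathcal{B}_N)$-eigenvalue), or (ii) $h=\sum_{\kappa=0}^N c_\kappa(\alpha)h_{n,\kappa}$ for some coefficients $c_\kappa(\alpha)\in\mathbb{C}$. There are $N+1$ mutually orthogonal eigenvectors of $L_\alpha(\mathcal{B}_N)$ of the second type.
   Context: $L(\mathcal{B}_N)$ is the unnormalized Laplacian $(Lf)(v)=\sum_{w\sim v}[f(v)-f(w)]$ of the Boolean cube $\mathcal{B}_N$ (vertex set $\mathbb{Z}_2^N$, $v\sim w$ iff $v-w=e_i$ for a standard basis vector $e_i$). Write $\mathbf{0}=(0,\dots,0)$, $\mathbf{1}=(1,\dots,1)$. For $\alpha\ne0$, the corner operator $C_\alpha$ on vertex functions of $\mathcal{B}_N$ is defined by $(C_\alpha f)(\mathbf{0})=f(\mathbf{0})-f(\mathbf{1})/\alpha$, $(C_\alpha f)(\mathbf{1})=f(\mathbf{1})-\alpha f(\mathbf{0})$, and $(C_\alpha f)(v)=0$ for $v\notin\{\mathbf{0},\mathbf{1}\}$. A Dirichlet eigenvector of $L(\mathcal{B}_N)$ is an eigenvector vanishing at $\mathbf{0}$ and $\mathbf{1}$. For $\gamma\in\mathbb{Z}_2^N$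 let $|\gamma|$ be its number of coordinates equal to $1$ and $h_\gamma(v)=2^{-N/2}(-1)^{\langle v,\gamma\rangle}$; for $\kappa=0,\dots,N$, $h_{n,\kappa}=c_\kappa\sum_{|\gamma|=\kappa}h_\gamma$ with $c_\kappa>0$ chosen so that $\|h_{n,\kappa}\|=1$. *)

(* Defs.v *)
(* Scalars: an arbitrary numeric algebraically closed
   field C (e.g. the complex numbers), with conjugation x^* and norm `|x|. *)
From HB Require Import structures.
From mathcomp Require Import all_boot all_order all_algebra.
Set Implicit Arguments. Unset Strict Implicit. Unset Printing Implicit Defensive.
Import Order.TTheory GRing.Theory Num.Theory.
Local Open Scope ring_scope.

Definition cube (N : nat) : finType := {ffun 'I_N -> bool}.

Definition cube0 (N : nat) : cube N := [ffun => false].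
Definition cube1 (N : nat) : cube N := [ffun => true].

Definition cube_adj (N : nat) (v w : cube N) : bool :=
  #|[set i : 'I_N | v i != w i]| == 1%N.

Section Ops.
Variables (C : numClosedFieldType) (N : nat).

Definition cubeL (f : cube N -> C) (v : cube N) : C :=
  \sum_(w : cube N | cube_adj v w) (f v - f w).

Definition corner (alpha : C) (f : cube N -> C) (v : cube N) : C :=
  if v == cube0 N then f (cube0 N) - f (cube1 N) / alpha
  else if v == cube1 N then f (cube1 N) - alpha * f (cube0 N)
  else 0.

Definition augL (alpha : C) (f : cube N -> C) (v : cube N) : C :=
  cubeL f v + corner alpha f v.

Definition cdot (f g : cube N -> C) : C := \sum_(v : cube N) f v * (g v)^*.
Definition cnorm (f : cube N -> C) : C := sqrtC (cdot f f).

Definition eigenpair (A : (cube N -> C) -> cube N -> C) (h : cube N -> C) (lam : C) :=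
  (exists v, h v != 0) /\ forall v, A h v = lam * h v.

Definition dirichlet_eigvec (h : cube N -> C) : Prop :=
  (exists lam, eigenpair cubeL h lam) /\ h (cube0 N) = 0 /\ h (cube1 N) = 0.

Definition wt (g : cube N) : nat := #|[set i : 'I_N | g i]|.
Definition ip2 (v g : cube N) : nat := #|[set i : 'I_N | v i && g i]|.

Definition hgamma (g : cube N) (v : cube N) : C :=
  (sqrtC (2 ^+ N))^-1 * (-1) ^+ ip2 v g.

Definition hsum (k : nat) (v : cube N) : C :=
  \sum_(g : cube N | wt g == k) hgamma g v.
Definition hnk (k : nat) (v : cube N) : C := (cnorm (hsum k))^-1 * hsum k v.

Definition lin_indep (I : finType) (h : I -> cube N -> C) : Prop :=
  forall c : I -> C, (forall v, \sum_(i : I) c i * h i v = 0) -> forall i, c i = 0.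

(* complete set of eigenvectors: #|V| linearly independent eigenvectors
   (a basis of the space of vertex functions), indexed by the vertices *)
Definition complete_eigvecs (A : (cube N -> C) -> cube N -> C)
    (h : cube N -> cube N -> C) : Prop :=
  lin_indep h /\ forall i, exists lam, eigenpair A (h i) lam.

Definition type_i (alpha : C) (h : cube N -> C) : Prop :=
  dirichlet_eigvec h /\ exists lam, eigenpair cubeL h lam /\ eigenpair (augL alpha) h lam.

Definition type_ii (h : cube N -> C) : Prop :=
  exists c : 'I_N.+1 -> C, forall v, h v = \sum_(k < N.+1) c k * hnk k v.

End Ops.

(* Main.v *)
Require Import Defs.
From HB Require Import structures.
From mathcomp Require Import all_boot all_order all_algebra.
From mathcomp Require Import ring sesquilinear spectral.
Import Order.TTheory GRing.Theory Num.Theory.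
Local Open Scope ring_scope.
Set Implicit Arguments. Unset Strict Implicit. Unset Printing Implicit Defensive.

Section S_A.
Variables (C : numClosedFieldType) (N : nat).
Definition sgn (b : bool) : C := if b then -1 else 1.
Definition sg (v g : cube N) : C := \prod_i sgn (v i && g i).

Lemma signE (v g : cube N) : (-1) ^+ ip2 v g = sg v g.
Proof.
rewrite /ip2 /sg /sgn -big_mkcond /= prodr_const; congr (_ ^+ _).
by apply: eq_card => i; rewrite inE.
Qed.

Lemma sgC v g : sg v g = sg g v.
Proof. by apply: eq_bigr => i _; rewrite andbC. Qed.

Lemma sum_sg2 (g g' : cube N) :
  \sum_v sg v g * sg v g' = (g == g')%:R * 2 ^+ N.
Proof.
have -> : \sum_v sg v g * sg v g' = \prod_(i : 'I_N) \sum_(b : bool) sgn (b && g i) * sgn (b && g' i).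
  rewrite bigA_distr_bigA /=; apply: eq_bigr => v _.
  by rewrite /sg -big_split.
rewrite (eq_bigr (fun i => if g i == g' i then 2 else 0)); last first.
  by move=> i _; rewrite big_bool /sgn /=; case: (g i); case: (g' i) => //=; rewrite ?mulr1 ?mulrNN ?mulr1 ?addrN ?mulrN ?mulr1 ?addNr // .
case: eqP => [->|/eqP ne].
  by rewrite (eq_bigr (fun=> 2)) ?prodr_const ?card_ord ?mul1r // => i _; rewrite eqxx.
have [i hi] : exists i, g i != g' i.
  by apply/existsP; apply: contraR ne => /existsPn h; apply/eqP/ffunP => i; apply/eqP; move: (h i); rewrite negbK.
by rewrite (bigD1 i) //= (negbTE hi) mul0r mul0r.
Qed.
End S_A.

Section S_B.
Variables (C : numClosedFieldType) (N : nat).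
Definition flipc (v : cube N) (i : 'I_N) : cube N := [ffun j => if j == i then ~~ v i else v j].

Lemma flip_inj v : injective (flipc v).
Proof.
move=> i j /ffunP /(_ i); rewrite !ffunE eqxx; case: eqP => // _.
by case: (v i).
Qed.

Lemma adj_flip v w : cube_adj v w = (w \in [set flipc v i | i : 'I_N]).
Proof.
rewrite /cube_adj; apply/idP/imsetP => [/cards1P [i hi]|[i _ ->]].
  exists i => //; apply/ffunP => j; rewrite ffunE.
  move/setP: hi => /(_ j); rewrite !inE.
  have [->|ne] := eqVneq j i; first by rewrite ?eqxx; case: (v _); case: (w _).
  by case: (v j); case: (w j).
apply/cards1P; exists i; apply/setP => j; rewrite !inE ffunE.
case E: (j == i); last by rewrite eqxx. by move/eqP: E => ->; case: (v i).
Qed.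

Lemma sum_adj (F : cube N -> C) v :
  \sum_(w | cube_adj v w) F w = \sum_i F (flipc v i).
Proof.
rewrite (eq_bigl (mem [set flipc v i | i : 'I_N])); last by move=> w; rewrite adj_flip.
by rewrite big_imset //= => i j _ _; apply: flip_inj.
Qed.

Lemma sg_flip (v g : cube N) i : sg C (flipc v i) g = sg C v g * sgn C (g i).
Proof.
rewrite /sg (bigD1 i) //= [in RHS](bigD1 i) //= ffunE eqxx.
rewrite (eq_bigr (fun j => sgn C (v j && g j))); last first.
  by move=> j /negbTE ji; rewrite ffunE ji.
rewrite mulrAC; congr (_ * _).
by rewrite /sgn; case: (v i); case: (g i); rewrite /= ?mulr1 ?mul1r ?mulrNN ?mulr1.
Qed.

Lemma hgammaE (g v : cube N) : hgamma C g v = (sqrtC (2 ^+ N))^-1 * sg C v g :> C.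
Proof. by rewrite /hgamma signE. Qed.

Lemma cubeL_h (g v : cube N) : cubeL (hgamma C g) v = (2 * wt g)%:R * hgamma C g v.
Proof.
rewrite /cubeL sum_adj.
rewrite (eq_bigr (fun i => hgamma C g v * (if g i then 2 else 0))); last first.
  move=> i _; rewrite !hgammaE sg_flip /sgn.
  by case: (g i); rewrite ?mulr0 ?mulr1 ?subrr //; ring.
rewrite -(big_distrr (hgamma C g v)) /= mulrC; congr (_ * _).
rewrite -big_mkcond /= sumr_const natrM mulr_natr; congr (_ *+ _).
by apply: eq_card => i; rewrite inE.
Qed.
End S_B.

Section S_Cc.
Variables (N : nat).
Definition rep (k : 'I_N.+1) : cube N := [ffun i : 'I_N => (i < k)%N].
Definition kw (g : cube N) : 'I_N.+1 := inord (wt g).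

Lemma wt_le (g : cube N) : (wt g < N.+1)%N.
Proof. by rewrite ltnS /wt -[X in (_ <= X)%N]card_ord max_card. Qed.

Lemma kwE g : nat_of_ord (kw g) = wt g.
Proof. by rewrite /kw inordK // wt_le. Qed.

Lemma wt_rep k : wt (rep k) = k.
Proof.
rewrite /wt -sum1_card.
rewrite (eq_bigl (fun i : 'I_N => true && (i < k)%N)); last by move=> i; rewrite inE ffunE.
have le : (k <= N)%N by rewrite -ltnS ltn_ord.
by rewrite (big_ord_narrow_cond le) /= sum1_card card_ord.
Qed.

Lemma kw_rep k : kw (rep k) = k.
Proof. by apply: val_inj; rewrite /= kwE wt_rep. Qed.

Lemma rep_inj : injective rep.
Proof. by move=> i j e; rewrite -(kw_rep i) e kw_rep. Qed.
End S_Cc.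

Section S_D.
Variables (C : numClosedFieldType) (N : nat).
Definition sN : C := (sqrtC (2 ^+ N))^-1.

Lemma two_neq0 : (2 ^+ N : C) != 0.
Proof. by rewrite expf_neq0 // pnatr_eq0. Qed.

Lemma sN_real : sN^* = sN.
Proof.
rewrite /sN fmorphV; congr (_^-1); apply: conj_Creal.
by apply: ger0_real; rewrite sqrtC_ge0 exprn_ge0 // ler0n.
Qed.

Lemma sN2 : sN * sN = (2 ^+ N)^-1.
Proof. by rewrite /sN -invfM -expr2 sqrtCK. Qed.

Lemma conj_sg (v g : cube N) : (sg C v g)^* = sg C v g.
Proof.
rewrite /sg rmorph_prod; apply: eq_bigr => i _.
by rewrite /sgn; case: (_ && _); rewrite ?rmorphN1 ?rmorph1.
Qed.

Lemma sg_0r (v : cube N) : sg C v (cube0 N) = 1.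
Proof. by rewrite /sg big1 // => i _; rewrite ffunE andbF. Qed.

Lemma sg_0l (v : cube N) : sg C (cube0 N) v = 1.
Proof. by rewrite sgC sg_0r. Qed.

Lemma sg_1 (g : cube N) : sg C (cube1 N) g = (-1) ^+ wt g.
Proof.
rewrite -signE; congr (_ ^+ _); apply: eq_card => i.
by rewrite !inE ffunE.
Qed.

Definition fexp (F : cube N -> C) (v : cube N) : C := \sum_g F g * hgamma C g v.

Lemma conj_h (g v : cube N) : (hgamma C g v)^* = hgamma C g v.
Proof. by rewrite !hgammaE rmorphM /= conj_sg -/sN sN_real. Qed.

Lemma sum_hh (g g' : cube N) : \sum_v hgamma C g v * hgamma C g' v = (g == g')%:R.
Proof.
rewrite (eq_bigr (fun v => sN * sN * (sg C v g * sg C v g'))); last first.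
  by move=> v _; rewrite !hgammaE -/sN; ring.
by rewrite -mulr_sumr sum_sg2 sN2 mulrCA mulVf ?mulr1 // two_neq0.
Qed.

Lemma sum_delta (T : finType) (a : T) (F : T -> C) : \sum_g F g * (g == a)%:R = F a.
Proof.
rewrite (bigD1 a) //= eqxx mulr1 big1 ?addr0 // => g ne.
by rewrite (negbTE ne) mulr0.
Qed.

Lemma ortho_h (F G : cube N -> C) :
  cdot (fexp F) (fexp G) = \sum_g F g * (G g)^*.
Proof.
rewrite /cdot /fexp.
transitivity (\sum_v \sum_g \sum_g' F g * (G g')^* * (hgamma C g v * hgamma C g' v)).
  apply: eq_bigr => v _; rewrite rmorph_sum /= big_distrlr /=.
  apply: eq_bigr => g _; apply: eq_bigr => g' _.
  by rewrite rmorphM /= conj_h; ring.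
rewrite exchange_big /=; apply: eq_bigr => g _.
rewrite exchange_big /=.
rewrite (eq_bigr (fun g' => F g * (G g')^* * (g' == g)%:R)).
  by rewrite -(sum_delta g (fun g' => F g * (G g')^*)).
by move=> g' _; rewrite -mulr_sumr sum_hh eq_sym.
Qed.
End S_D.

Section S_E.
Variables (C : numClosedFieldType) (N : nat).
Local Notation fexp := (@fexp C N).
Local Notation sN := (@sN C N).

Lemma fexp_0 F : fexp F (cube0 N) = sN * \sum_g F g.
Proof.
rewrite /fexp mulr_sumr; apply: eq_bigr => g _.
by rewrite hgammaE sg_0l -/sN mulr1 mulrC.
Qed.

Lemma fexp_1 F : fexp F (cube1 N) = sN * \sum_g F g * (-1) ^+ wt g.
Proof.
rewrite /fexp mulr_sumr; apply: eq_bigr => g _.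
by rewrite hgammaE sg_1 -/sN; ring.
Qed.

Lemma cubeL_fexp F v : cubeL (fexp F) v = fexp (fun g => F g * (2 * wt g)%:R) v.
Proof.
rewrite /cubeL /fexp.
under eq_bigr do rewrite -sumrB.
rewrite exchange_big /=; apply: eq_bigr => g _.
rewrite -mulrA -cubeL_h /cubeL mulr_sumr; apply: eq_bigr => w _.
by rewrite mulrBr.
Qed.

Lemma delta_fexp (a v : cube N) : (v == a)%:R = fexp (fun g => sN * sg C a g) v.
Proof.
rewrite /fexp (eq_bigr (fun g => sN * sN * (sg C g a * sg C g v))); last first.
  by move=> g _; rewrite hgammaE -/sN (sgC C a g) (sgC C v g); ring.
by rewrite -mulr_sumr sum_sg2 sN2 eq_sym mulrCA mulVf ?mulr1 // two_neq0.
Qed.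

Lemma cube01 : (0 < N)%N -> cube0 N != cube1 N.
Proof.
move=> Np; apply/eqP => /ffunP /(_ (Ordinal Np)).
by rewrite !ffunE.
Qed.

Lemma corner_fexp (alpha : C) F v : (0 < N)%N -> alpha * alpha^* = 1 ->
  corner alpha (fexp F) v =
  fexp (fun g => (fexp F (cube0 N) - alpha^* * fexp F (cube1 N)) *
                 (sN * (1 - alpha * (-1) ^+ wt g))) v.
Proof.
move=> Np ha.
set s := (fexp F (cube0 N) - _).
have -> : fexp (fun g => s * (sN * (1 - alpha * (-1) ^+ wt g))) v =
   s * ((v == cube0 N)%:R - alpha * (v == cube1 N)%:R).
  rewrite !delta_fexp /fexp !mulr_sumr -sumrB mulr_sumr; apply: eq_bigr => g _.
  by rewrite sg_0l sg_1; ring.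
have an0 : alpha != 0 by apply/eqP => a0; move: ha; rewrite a0 mul0r => /eqP; rewrite eq_sym oner_eq0.
have ai : alpha^-1 = alpha^*.
  by rewrite -[RHS]mul1r -(mulVf an0) -mulrA ha mulr1.
rewrite /corner; have [->|n0] := eqVneq v (cube0 N).
  rewrite (negbTE (cube01 Np)) /s mulr0 subr0 mulr1 ai.
  by rewrite mulrC.
case: ifP => [/eqP e|_].
  rewrite /s /= mulr1 sub0r -[in LHS](mul1r (fexp F (cube1 N))) -ha; ring.
by rewrite mulr0 subrr mulr0.
Qed.
End S_E.

Section S_F.
Import Num.Def.
Local Open Scope sesquilinear_scope.
Variables (C : numClosedFieldType) (N : nat) (alpha : C).

Definition mm (l : 'I_N.+1) : nat := #|[set g : cube N | kw g == l]|.
Definition rr l : C := sqrtC (mm l)%:R.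
Definition aa (l : 'I_N.+1) : C := 1 - alpha * (-1) ^+ l.
Definition ttN : C := (2 ^+ N)^-1.
Definition Bm : 'M[C]_N.+1 :=
  \matrix_(l, j) ((l == j)%:R * (2 * j)%:R + ttN * rr j * aa j * rr l * (aa l)^*).

Lemma mm_pos l : (0 < mm l)%N.
Proof. by apply/card_gt0P; exists (rep l); rewrite inE kw_rep. Qed.

Lemma rr_neq0 l : rr l != 0.
Proof. by rewrite /rr sqrtC_eq0 pnatr_eq0 -lt0n mm_pos. Qed.

Lemma rr_real l : (rr l)^* = rr l.
Proof.
apply: conj_Creal; apply: ger0_real; by rewrite sqrtC_ge0 ler0n.
Qed.

Lemma rr2 l : rr l * rr l = (mm l)%:R.
Proof. by rewrite -expr2 sqrtCK. Qed.

Lemma tt_real : ttN^* = ttN.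
Proof.
by rewrite /ttN fmorphV rmorphXn /= rmorph_nat.
Qed.

Lemma Bm_herm : Bm ^t conjC = Bm.
Proof.
apply/matrixP => i j; rewrite !mxE rmorphD !rmorphM /= !rmorph_nat.
rewrite tt_real !rr_real conjCK eq_sym.
have [->|ne] := eqVneq j i; first by ring.
by rewrite !mul0r !add0r; ring.
Qed.

Lemma Bm_normal : Bm \is normalmx.
Proof. by apply/normalmxP; rewrite Bm_herm. Qed.

Definition PP := spectralmx Bm.
Definition dd := spectral_diag Bm.

Lemma eigP k j : \sum_l PP k l * Bm l j = dd 0 k * PP k j.
Proof.
have e : PP *m Bm = diag_mx dd *m PP.
  have E := orthomx_spectralP Bm_normal.
  rewrite {1}E /PP !mulmxA mulmxV ?spectral_unit // mul1mx //.
rewrite mul_diag_mx in e; move/matrixP: e => /(_ k j); rewrite !mxE => ->.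
by [].
Qed.

Lemma unitP k k' : \sum_j PP k j * (PP k' j)^* = (k == k')%:R.
Proof.
have := spectral_unitarymx Bm => /unitarymxP /matrixP /(_ k k').
rewrite !mxE => <-; apply: eq_bigr => j _; by rewrite !mxE.
Qed.
End S_F.

Section S_G.
Import Num.Def.
Local Open Scope sesquilinear_scope.
Variables (C : numClosedFieldType) (N : nat) (alpha : C).
Hypothesis Np : (0 < N)%N.
Hypothesis ha : alpha * alpha^* = 1.
Local Notation fexp := (@fexp C N).
Local Notation sN := (@sN C N).
Local Notation P := (PP N alpha).
Local Notation rr := (@rr C N).

Lemma kw_eq (g : cube N) (l : 'I_N.+1) : (kw g == l) = (wt g == l).
Proof. by rewrite -kwE. Qed.

Lemma sum_kwP (l : 'I_N.+1) (G : cube N -> C) (c : C) :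
  (forall g, kw g == l -> G g = c) -> \sum_(g | kw g == l) G g = (mm l)%:R * c.
Proof.
move=> H; rewrite (eq_bigr (fun=> c)) // sumr_const mulr_natl; congr (_ *+ _).
by apply: eq_card => g; rewrite inE.
Qed.

Lemma sum_kw (G : 'I_N.+1 -> C) : \sum_g G (kw g) = \sum_l (mm l)%:R * G l.
Proof.
rewrite (partition_big (@kw N) xpredT) //=; apply: eq_bigr => l _.
by apply: sum_kwP => g /eqP ->.
Qed.

Lemma sum_ind (T : finType) (Q : pred T) (a : T) :
  \sum_(g | Q g) (g == a)%:R = (Q a)%:R :> C.
Proof.
rewrite big_mkcond /= (bigD1 a) //= eqxx big1 ?addr0.
  by case: (Q a).
by move=> g /negbTE ne; rewrite ne; case: (Q g).
Qed.

Lemma rr_div l : (mm l)%:R / rr l = rr l.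
Proof. by rewrite -rr2 mulfK // rr_neq0. Qed.

Lemma Bm_sum k j : \sum_l P k l * Bm N alpha l j =
  P k j * (2 * j)%:R + ttN C N * rr j * aa alpha j * \sum_l P k l * rr l * (aa alpha l)^*.
Proof.
rewrite (eq_bigr (fun l => (P k l * (2 * j)%:R) * (l == j)%:R +
    ttN C N * rr j * aa alpha j * (P k l * rr l * (aa alpha l)^*))); last first.
  by move=> l _; rewrite mxE; ring.
by rewrite big_split /= sum_delta mulr_sumr.
Qed.

Definition Phi2 (k : 'I_N.+1) (g : cube N) : C := P k (kw g) / rr (kw g).

Lemma eig2 k v : augL alpha (fexp (Phi2 k)) v = dd N alpha 0 k * fexp (Phi2 k) v.
Proof.
rewrite /augL cubeL_fexp corner_fexp //.
set sig := (_ - _ * _).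
have hsig : sig * sN = ttN C N * \sum_l P k l * rr l * (aa alpha l)^*.
  have -> : sig = sN * \sum_g Phi2 k g * (1 - alpha^* * (-1) ^+ wt g).
    rewrite /sig fexp_0 fexp_1 !mulr_sumr -sumrB; apply: eq_bigr => g _; ring.
  rewrite mulrC mulrA sN2.
  rewrite (eq_bigr (fun g => (fun l => P k l / rr l * (aa alpha l)^*) (kw g))); last first.
    move=> g _; rewrite /Phi2 /aa rmorphB rmorph1 rmorphM /= rmorphXn rmorphN1 kwE; ring.
  rewrite (sum_kw (fun l => P k l / rr l * (aa alpha l)^*)) /ttN; congr (_ * _); apply: eq_bigr => l _.
  rewrite -[in RHS]rr_div; field; exact: rr_neq0.
rewrite /fexp -big_split mulr_sumr /=; apply: eq_bigr => g _.
rewrite -mulrDl [in RHS]mulrA; congr (_ * _).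
have := eigP alpha k (kw g); rewrite Bm_sum => e.
rewrite mulrA hsig /Phi2 -kwE [in RHS]mulrA -e.
rewrite /aa; field; exact: rr_neq0.
Qed.

Definition Phi1 (i g : cube N) : C := (g == i)%:R - (g == rep (kw i))%:R.

Lemma sum_delta1 (a : cube N) (F : cube N -> C) : \sum_g (g == a)%:R * F g = F a.
Proof. by rewrite -(sum_delta a F); apply: eq_bigr => g _; rewrite mulrC. Qed.

Lemma wt_rep_kw (i : cube N) : wt (rep (kw i)) = wt i.
Proof. by rewrite wt_rep kwE. Qed.

Lemma fexp_Phi1_0 i : fexp (Phi1 i) (cube0 N) = 0.
Proof.
rewrite fexp_0 /Phi1 sumrB (sum_ind xpredT i) (sum_ind xpredT (rep (kw i))).
by rewrite subrr mulr0.
Qed.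

Lemma fexp_Phi1_1 i : fexp (Phi1 i) (cube1 N) = 0.
Proof.
rewrite fexp_1 /Phi1 (eq_bigr (fun g => (g == i)%:R * (-1) ^+ wt g - (g == rep (kw i))%:R * (-1) ^+ wt g)).
  by rewrite sumrB !sum_delta1 wt_rep_kw subrr mulr0.
by move=> g _; rewrite mulrBl.
Qed.

Lemma Phi1_wt i g : Phi1 i g * (2 * wt g)%:R = (2 * wt i)%:R * Phi1 i g.
Proof.
rewrite /Phi1; have [->|ne] := eqVneq g i; first by rewrite mulrC.
have [->|ne2] := eqVneq g (rep (kw i)); first by rewrite wt_rep_kw mulrC.
by rewrite subrr mulr0 mul0r.
Qed.

Lemma cubeL_Phi1 i v : cubeL (fexp (Phi1 i)) v = (2 * wt i)%:R * fexp (Phi1 i) v.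
Proof.
rewrite cubeL_fexp /fexp mulr_sumr; apply: eq_bigr => g _.
by rewrite Phi1_wt mulrA.
Qed.

Lemma augL_Phi1 i v : augL alpha (fexp (Phi1 i)) v = (2 * wt i)%:R * fexp (Phi1 i) v.
Proof.
rewrite /augL cubeL_Phi1 corner_fexp //.
have -> : fexp (Phi1 i) (cube0 N) - alpha^* * fexp (Phi1 i) (cube1 N) = 0.
  by rewrite fexp_Phi1_0 fexp_Phi1_1 mulr0 subr0.
rewrite [X in _ + X](_ : _ = 0) ?addr0 //.
by rewrite /fexp big1 // => g _; rewrite !mul0r.
Qed.

Definition Phi (i g : cube N) : C :=
  if i == rep (kw i) then Phi2 (kw i) g else Phi1 i g.

Lemma fexp_lin (c : cube N -> C) v :
  \sum_i c i * fexp (Phi i) v = fexp (fun g => \sum_i c i * Phi i g) v.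
Proof.
rewrite /fexp.
under eq_bigr do rewrite mulr_sumr.
rewrite exchange_big /=; apply: eq_bigr => g _.
by rewrite mulr_suml; apply: eq_bigr => i _; rewrite mulrA.
Qed.

Lemma fexp_zero (Psi : cube N -> C) : (forall v, fexp Psi v = 0) -> forall g, Psi g = 0.
Proof.
move=> H g0; have := ortho_h Psi (fun g => (g == g0)%:R).
rewrite /cdot big1; last by move=> v _; rewrite H mul0r.
under eq_bigr do rewrite rmorph_nat.
by rewrite sum_delta.
Qed.

Lemma Phi_sum_l i (l : 'I_N.+1) : \sum_(g | kw g == l) Phi i g =
  if i == rep (kw i) then rr l * P (kw i) l else 0.
Proof.
rewrite /Phi; case: ifP => _.
  rewrite (@sum_kwP l _ (P (kw i) l / rr l)); last by move=> g /eqP e; rewrite /Phi2 e.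
  by rewrite -[in RHS]rr_div; field; exact: rr_neq0.
by rewrite /Phi1 sumrB !sum_ind kw_rep subrr.
Qed.

Lemma lin_indep_all : lin_indep (fun i => fexp (Phi i)).
Proof.
move=> c H.
have HP := fexp_zero (fun v => etrans (esym (fexp_lin c v)) (H v)).
have HD : forall l, \sum_k c (rep k) * P k l = 0.
  move=> l.
  have : \sum_(g | kw g == l) \sum_i c i * Phi i g = 0 by rewrite big1 // => g _; exact: HP.
  rewrite exchange_big /=.
  under eq_bigr do rewrite -mulr_sumr Phi_sum_l.
  rewrite (partition_big (@kw N) xpredT) //=.
  rewrite (eq_bigr (fun k => c (rep k) * (rr l * P k l))); last first.
    move=> k _; rewrite (bigD1 (rep k)) /=; last by rewrite kw_rep eqxx.
    rewrite kw_rep eqxx big1 ?addr0 // => i /andP [/eqP ki ne].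
    by rewrite ki (negbTE ne) mulr0.
  under eq_bigr do rewrite mulrCA.
  rewrite -mulr_sumr => /eqP; rewrite mulf_eq0 (negbTE (rr_neq0 C l)) /= => /eqP.
  done.
have HR : forall k, c (rep k) = 0.
  move=> k'; transitivity (\sum_k c (rep k) * (k == k')%:R); first by rewrite sum_delta.
  transitivity (\sum_j (\sum_k c (rep k) * P k j) * (P k' j)^*).
    rewrite (eq_bigr (fun k => \sum_j c (rep k) * P k j * (P k' j)^*)).
      by rewrite exchange_big; apply: eq_bigr => j _; rewrite mulr_suml.
    by move=> k _; rewrite -(unitP alpha) mulr_sumr; apply: eq_bigr => j _; rewrite mulrA.
  by rewrite big1 // => j _; rewrite HD mul0r.
move=> i; have [e|nr] := eqVneq i (rep (kw i)); first by rewrite e HR.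
have := HP i; rewrite (bigD1 i) //= big1 ?addr0.
  rewrite /Phi; case: ifP => [/eqP e|_]; first by case/eqP: nr.
  rewrite /Phi1 eqxx; case: eqP => [e|_]; first by case/eqP: nr.
  by rewrite subr0 mulr1.
move=> j ne; have [e|nrj] := eqVneq j (rep (kw j)).
  by rewrite (_ : c j = 0) ?mul0r // e HR.
rewrite /Phi; try (case: ifP => [/eqP e|_]; first by case/eqP: nrj).
rewrite /Phi1; case: eqP => [e|_]; first by rewrite e eqxx in ne.
case: eqP => [e'|_]; last by rewrite subrr mulr0.
by case/eqP: nr; rewrite [in LHS]e' [in RHS]e' kw_rep.
Qed.

Lemma nz_of_indep (h : cube N -> cube N -> C) : lin_indep h -> forall i, exists v, h i v != 0.
Proof.
move=> H i; case: (boolP [exists v, h i v != 0]) => [/existsP //|/existsPn Hn].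
have E : forall v, \sum_j (j == i)%:R * h j v = 0.
  move=> v; rewrite (eq_bigr (fun j => (j == i)%:R * h i v)); last first.
    by move=> j _; case: eqP => [->|]; rewrite ?mul0r ?mul1r.
  by rewrite sum_delta1; move/negbNE/eqP: (Hn v).
by have := H _ E i; rewrite eqxx => /eqP; rewrite oner_eq0.
Qed.

Lemma hsum_fexp (l : 'I_N.+1) (v : cube N) : hsum C l v = fexp (fun g => (kw g == l)%:R) v.
Proof.
rewrite /hsum /fexp big_mkcond /=; apply: eq_bigr => g _.
by rewrite kw_eq; case: (wt g == l); rewrite ?mul1r ?mul0r.
Qed.

Lemma cnorm_hsum (l : 'I_N.+1) : cnorm (hsum C (N:=N) l) = rr l.
Proof.
rewrite /cnorm /rr; congr sqrtC.
transitivity (cdot (fexp (fun g => (kw g == l)%:R)) (fexp (fun g => (kw g == l)%:R))).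
  by apply: eq_bigr => v _; rewrite !hsum_fexp.
rewrite ortho_h (eq_bigr (fun g => if kw g == l then 1 else 0)); last first.
  by move=> g _; rewrite rmorph_nat; case: (kw g == l); rewrite ?mul1r ?mul0r.
by rewrite -big_mkcond /= (@sum_kwP l _ 1) ?mulr1.
Qed.

Lemma type2 k : type_ii (fexp (Phi2 k)).
Proof.
exists (fun l => P k l) => v.
rewrite /fexp (partition_big (@kw N) xpredT) //=; apply: eq_bigr => l _.
rewrite /hnk cnorm_hsum /hsum mulr_sumr mulr_sumr.
rewrite [in RHS](eq_bigl (fun g => kw g == l)); last by move=> g; rewrite kw_eq.
by apply: eq_bigr => g /eqP e; rewrite /Phi2 e [RHS]mulrA.
Qed.

Lemma ortho2 k k' : k != k' -> cdot (fexp (Phi2 k)) (fexp (Phi2 k')) = 0.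
Proof.
move=> ne; rewrite ortho_h.
rewrite (eq_bigr (fun g => (fun l => P k l / rr l * (P k' l / rr l)^*) (kw g))) //.
rewrite (sum_kw (fun l => P k l / rr l * (P k' l / rr l)^*)) -[RHS](_ : (k == k')%:R = 0); last by rewrite (negbTE ne).
rewrite -(unitP alpha); apply: eq_bigr => l _.
rewrite rmorphM /= fmorphV /= rr_real -rr2; field; exact: rr_neq0.
Qed.
End S_G.

Unset Implicit Arguments.
Theorem lemma4 (C : numClosedFieldType) (N : nat) (alpha : C) :
  (0 < N)%N -> `|alpha| = 1 ->
  exists h : cube N -> cube N -> C,
    complete_eigvecs (augL alpha) h /\
    (forall i, type_i alpha (h i) \/ type_ii (h i)) /\
    exists S : {set cube N},
      #|S| = N.+1 /\
      (forall i, i \in S -> type_ii (h i)) /\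
      (forall i j, i \in S -> j \in S -> i != j -> cdot (h i) (h j) = 0).
Proof.
move=> Np na.
have ha : alpha * alpha^* = 1 by rewrite -normCK na expr1n.
pose h := fun i : cube N => if i == rep (kw i) then fexp (Phi2 alpha (kw i))
                            else fexp (Phi1 C i).
have hE : forall i v, h i v = fexp (Phi alpha i) v.
  by move=> i v; rewrite /h /Phi; case: (i == rep (kw i)).
have LI : lin_indep h.
  move=> c Hc; apply: (lin_indep_all (alpha := alpha)) => v.
  by rewrite -[RHS](Hc v); apply: eq_bigr => i _; rewrite hE.
have NZ := nz_of_indep LI.
have hrep : forall k, h (rep k) = fexp (Phi2 alpha k).
  by move=> k; rewrite /h kw_rep eqxx.
exists h; split; [split => // i| split].
  move: (NZ i); rewrite /h; case: (i == rep (kw i)) => nz.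
    by exists (dd N alpha 0 (kw i)); split => // v; apply: eig2.
  by exists (2 * wt i)%:R; split => // v; apply: augL_Phi1.
  move=> i; move: (NZ i); rewrite /h; case: (i == rep (kw i)) => nz.
    by right; apply: type2.
  left; split.
    split; first by exists (2 * wt i)%:R; split => // v; apply: cubeL_Phi1.
    by split; [apply: fexp_Phi1_0 | apply: fexp_Phi1_1].
  exists (2 * wt i)%:R; split; split => // v; first exact: cubeL_Phi1.
  exact: augL_Phi1.
exists [set rep k | k : 'I_N.+1]; split.
  by rewrite card_imset ?card_ord //; exact: rep_inj.
split.
  by move=> i /imsetP [k _ ->]; rewrite hrep; apply: type2.
move=> i j /imsetP [k _ ->] /imsetP [k' _ ->] ne.
rewrite !hrep; apply: ortho2; apply: contraNneq ne => ->; done.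
Qed.
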